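(* Let $M\in\Lambda$ and $A\in\mathcal A$. (1) If $A\sqsubseteq M$ then $\mathcal T_n(A)\subseteq\mathrm{NF}(\mathcal T(M))$. (2) If $\mathcal T_n(A)\subseteq\mathcal T_n(\mathrm{BT}(M))$ then $A\in\mathcal A(M)$, where $\mathcal T_n(\mathrm{BT}(M))=\bigcup_{A'\in\mathcal A(M)}\mathcal T_n(A')$.
   Context: $\lambda$-terms and values are $M,N::=V\mid MN$, $V::=x\mid\lambda x.M$, up to $\alpha$-conversion. Rules: $(\beta_v)$ $(\lambda x.M)V\to M\{x:=V\}$ if $V$ is a value; $(\sigma_1)$ $(\lambda x.M)NP\to(\lambda x.MP)N$ if $x\notin\mathrm{FV}(P)$; $(\sigma_3)$ $V((\lambda x.M)N)\to(\lambda x.VM)N$ if $V$ is a value and $x\notin\mathrm{FV}(V)$; $\to_{\mathsf v}$ is their contextual closure, $\twoheadrightarrow_{\mathsf v}$ its reflexive-transitive closure. Approximants: $\Lambda_\bot$ is the set of $\lambda$-terms possibly containing a constant $\bot$; $\sqsubseteq$ is the smallest context-closed preorder on $\Lambda_\bot$ with $\bot\sqsubseteq x$, $\bot\sqsubseteq\lambda x.M$. Approximants $\mathcal A$ ($k\ge0$): $A::=B\mid C$; $B::=x\mid\lambda x.A\mid\bot\mid xBA_1\cdots A_k$; $C::=(\lambda x.A)(yBA_1\cdots A_k)$. $\mathcal A(M)=\{A\in\mathcal A\mid\exists N\in\Lambda,\ M\twoheadrightarrow_{\mathsf v}N,\ A\sqsubseteq N\}$. Resource calculus: resource values $v::=x\mid\lambda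 x.t$; simple terms $s,t::=st\mid[v_1,\dots,v_k]$ (bags are finite multisets); $[x^n]$ is $n$ copies of $x$. Linear substitution $e\langle x:=v_1,\dots,v_n\rangle$ is the set of terms obtained by replacing the $n$ free occurrences of $x$ in $e$ bijectively by $v_1,\dots,v_n$ (all permutations), or $\emptyset$ if $x$ does not occur exactly $n$ times free. Constructors extend multilinearly to sets. Rules: $(\beta_r)$ $[\lambda x.t][v_1,\dots,v_n]\to t\langle x:=v_1,\dots,v_n\rangle$; $(0)$ $[v_1,\dots,v_n]t\to\emptyset$ if $n\ne1$; $(\sigma_1)$ $[\lambda x.t]s_1s_2\to[\lambda x.ts_2]s_1$ if $x\notin\mathrm{FV}(s_1)$; $(\sigma_3)$ $[v]([\lambda x.t]s)\to[\lambda x.[v]t]s$ if $x\notin\mathrm{FV}(v)$. $\to_{\mathsf r}$ is the closure of these rules under abstraction, both sides of application, elements of bags, and on finite sets ($e\to\mathcal E_1$, $e\notin\mathcal E_2$ imply $\{e\}\cup\mathcal E_2\to\mathcal E_1\cup\mathcal E_2$); it is confluent and strongly normalizing, $\mathrm{nf}(e)$ is the normal form and $\mathrm{NF}(\mathcal E)=\bigcup_{e\in\mathcal E}\mathrm{nf}(e)$. Taylor expansion: $\mathcal T(x)=\{[x^n]\mid n\ge0\}$, $\mathcal T(\lambda x.N)=\{[\lambda x.t_1,\dots,\lambda x.t_n]\mid n\ge0,\ t_i\in\mathcal T(N)\}$, $\mathcal T(PQ)=\{st\mid s\in\mathcal T(P),t\in\mathcal T(Q)\}$. Normalized Taylor expansion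 of approximants: $\mathcal T_n(x)=\{[x^n]\mid n\ge0\}$; $\mathcal T_n(\lambda x.A')=\{[\lambda x.t_1,\dots,\lambda x.t_n]\mid n\ge0,\ t_i\in\mathcal T_n(A')\}$; $\mathcal T_n(\bot)=\{[\,]\}$; $\mathcal T_n(xBA_1\cdots A_k)=\{[x]t_0t_1\cdots t_k\mid t_0\in\mathcal T_n(B),\ t_i\in\mathcal T_n(A_i)\}$; $\mathcal T_n((\lambda x.A')(yBA_1\cdots A_k))=\{[\lambda x.s]t\mid s\in\mathcal T_n(A'),\ t\in\mathcal T_n(yBA_1\cdots A_k)\}$. *)

(* Defs.v *)
(* Lambda-terms are represented with de Bruijn indices
   (this realizes "up to alpha-conversion"); resource bags are lists,
   considered up to permutation via the congruence [req] below. *)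
From Stdlib Require Import List Permutation Arith Relations.
Import ListNotations.

Inductive lam : Type :=
| Var (n : nat)
| Lam (M : lam)
| App (M N : lam).

Fixpoint lift (c : nat) (M : lam) : lam :=
  match M with
  | Var n => if n <? c then Var n else Var (S n)
  | Lam M => Lam (lift (S c) M)
  | App M N => App (lift c M) (lift c N)
  end.

(* M{k := V}: capture-avoiding substitution of V for index k
   (indices above k are decremented, as the binder disappears) *)
Fixpoint subst (k : nat) (V : lam) (M : lam) : lam :=
  match M with
  | Var n => if n =? k then V else if n <? k then Var n else Var (pred n)
  | Lam M => Lam (subst (S k) (lift 0 V) M)
  | App M N => App (subst k V M) (subst k V N)
  end.

Definition is_value (M : lam) : Prop :=
  match M with Var _ | Lam _ => True | App _ _ => False end.

(* contextual closure of beta_v, sigma_1, sigma_3 ; the freshness side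
   conditions are automatic with de Bruijn indices (lifting) *)
Inductive vstep : lam -> lam -> Prop :=
| vs_beta M V : is_value V -> vstep (App (Lam M) V) (subst 0 V M)
| vs_sigma1 M N P :
    vstep (App (App (Lam M) N) P) (App (Lam (App M (lift 0 P))) N)
| vs_sigma3 V M N : is_value V ->
    vstep (App V (App (Lam M) N)) (App (Lam (App (lift 0 V) M)) N)
| vs_lam M M' : vstep M M' -> vstep (Lam M) (Lam M')
| vs_appl M M' N : vstep M M' -> vstep (App M N) (App M' N)
| vs_appr M N N' : vstep N N' -> vstep (App M N) (App M N').

Definition vred : lam -> lam -> Prop := clos_refl_trans lam vstep.

Inductive lamb : Type :=
| BVar (n : nat)
| BLam (M : lamb)
| BApp (M N : lamb)
| Bot.

Fixpoint emb (M : lam) : lamb :=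
  match M with
  | Var n => BVar n
  | Lam M => BLam (emb M)
  | App M N => BApp (emb M) (emb N)
  end.

Inductive approx : lamb -> lamb -> Prop :=
| ap_refl M : approx M M
| ap_trans M N P : approx M N -> approx N P -> approx M P
| ap_bot_var x : approx Bot (BVar x)
| ap_bot_lam M : approx Bot (BLam M)
| ap_lam M M' : approx M M' -> approx (BLam M) (BLam M')
| ap_appl M M' N : approx M M' -> approx (BApp M N) (BApp M' N)
| ap_appr M N N' : approx N N' -> approx (BApp M N) (BApp M N').

(* approximants:  A ::= B | C ;  B ::= x | λx.A | ⊥ | x B A1..Ak ;
   C ::= (λx.A)(y B A1..Ak).  [isNeu] is the shape  x B A1 .. Ak. *)
Inductive isA : lamb -> Prop :=
| A_B b : isB b -> isA b
| A_C a n : isA a -> isNeu n -> isA (BApp (BLam a) n)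
with isB : lamb -> Prop :=
| B_var x : isB (BVar x)
| B_lam a : isA a -> isB (BLam a)
| B_bot : isB Bot
| B_neu n : isNeu n -> isB n
with isNeu : lamb -> Prop :=
| N_head x b : isB b -> isNeu (BApp (BVar x) b)
| N_app n a : isNeu n -> isA a -> isNeu (BApp n a).

Definition inApprox (A : lamb) (M : lam) : Prop :=
  isA A /\ exists N : lam, vred M N /\ approx A (emb N).

Inductive rterm : Type :=
| RApp (s t : rterm)
| RBag (b : list rval)
with rval : Type :=
| RVar (n : nat)
| RLam (t : rterm).

Fixpoint rlift_t (c : nat) (t : rterm) : rterm :=
  match t with
  | RApp s u => RApp (rlift_t c s) (rlift_t c u)
  | RBag b => RBag ((fix go (b : list rval) : list rval :=
                       match b with [] => [] | v :: b => rlift_v c v :: go b end) b)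
  end
with rlift_v (c : nat) (v : rval) : rval :=
  match v with
  | RVar n => if n <? c then RVar n else RVar (S n)
  | RLam t => RLam (rlift_t (S c) t)
  end.

Inductive req : rterm -> rterm -> Prop :=
| req_refl t : req t t
| req_sym t u : req t u -> req u t
| req_trans t u w : req t u -> req u w -> req t w
| req_app s s' t t' : req s s' -> req t t' -> req (RApp s t) (RApp s' t')
| req_perm b b' : Permutation b b' -> req (RBag b) (RBag b')
| req_elem b1 v v' b2 : reqv v v' -> req (RBag (b1 ++ v :: b2)) (RBag (b1 ++ v' :: b2))
with reqv : rval -> rval -> Prop :=
| reqv_var n : reqv (RVar n) (RVar n)
| reqv_lam t t' : req t t' -> reqv (RLam t) (RLam t').

(* linear substitution:  lsub_t k vs e e'  iff  e' is one of the terms of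
   e<k := vs> : the occurrences of index k in e are replaced bijectively
   (in all possible ways, via the permutations) by the values of vs
   (which live in the outer context and are lifted under binders); the
   relation is empty unless k occurs exactly |vs| times free in e. *)
Inductive lsub_t : nat -> list rval -> rterm -> rterm -> Prop :=
| ls_app k vs vs1 vs2 s t s' t' :
    Permutation vs (vs1 ++ vs2) -> lsub_t k vs1 s s' -> lsub_t k vs2 t t' ->
    lsub_t k vs (RApp s t) (RApp s' t')
| ls_bag k vs b b' : lsub_b k vs b b' -> lsub_t k vs (RBag b) (RBag b')
with lsub_b : nat -> list rval -> list rval -> list rval -> Prop :=
| lsb_nil k : lsub_b k [] [] []
| lsb_cons k vs vs1 vs2 v v' b b' :
    Permutation vs (vs1 ++ vs2) -> lsub_v k vs1 v v' -> lsub_b k vs2 b b' ->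
    lsub_b k vs (v :: b) (v' :: b')
with lsub_v : nat -> list rval -> rval -> rval -> Prop :=
| lsv_hit k v : lsub_v k [v] (RVar k) v
| lsv_lt k n : n < k -> lsub_v k [] (RVar n) (RVar n)
| lsv_gt k n : k < n -> lsub_v k [] (RVar n) (RVar (pred n))
| lsv_lam k vs t t' :
    lsub_t (S k) (List.map (rlift_v 0) vs) t t' -> lsub_v k vs (RLam t) (RLam t').

(* one reduction step  e -> E  with E a (finite) set of simple terms,
   represented as a predicate; closure under abstraction, both sides of
   application and bag elements, extended multilinearly. *)
Inductive rstep : rterm -> (rterm -> Prop) -> Prop :=
| r_beta t vs : rstep (RApp (RBag [RLam t]) (RBag vs)) (fun u => lsub_t 0 vs t u)
| r_zero b t : length b <> 1 -> rstep (RApp (RBag b) t) (fun _ => False)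
| r_sigma1 t s1 s2 :
    rstep (RApp (RApp (RBag [RLam t]) s1) s2)
          (eq (RApp (RBag [RLam (RApp t (rlift_t 0 s2))]) s1))
| r_sigma3 v t s :
    rstep (RApp (RBag [v]) (RApp (RBag [RLam t]) s))
          (eq (RApp (RBag [RLam (RApp (RBag [rlift_v 0 v]) t)]) s))
| r_appl s t S : rstep s S -> rstep (RApp s t) (fun u => exists s', S s' /\ u = RApp s' t)
| r_appr s t T : rstep t T -> rstep (RApp s t) (fun u => exists t', T t' /\ u = RApp s t')
| r_bag b1 v b2 V : rvstep v V ->
    rstep (RBag (b1 ++ v :: b2)) (fun u => exists v', V v' /\ u = RBag (b1 ++ v' :: b2))
with rvstep : rval -> (rval -> Prop) -> Prop :=
| rv_lam t T : rstep t T -> rvstep (RLam t) (fun w => exists t', T t' /\ w = RLam t').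

Definition rnormal (e : rterm) : Prop := forall E, ~ rstep e E.

(* nf e u : u belongs to the normal form nf(e).  Reduction is confluent
   and strongly normalizing, so nf(e) = NF(E) for any step e -> E;
   we take the union over all reduction paths, which is nf(e). *)
Inductive nf : rterm -> rterm -> Prop :=
| nf_refl e : rnormal e -> nf e e
| nf_step e E e' u : rstep e E -> E e' -> nf e' u -> nf e u.

Definition NF (E : rterm -> Prop) : rterm -> Prop :=
  fun u => exists e, E e /\ nf e u.

Inductive Tay : lam -> rterm -> Prop :=
| T_var x n : Tay (Var x) (RBag (repeat (RVar x) n))
| T_lam N ts : Forall (Tay N) ts -> Tay (Lam N) (RBag (List.map RLam ts))
| T_app P Q s t : Tay P s -> Tay Q t -> Tay (App P Q) (RApp s t).

Inductive Tn : lamb -> rterm -> Prop :=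
| Tn_var x n : Tn (BVar x) (RBag (repeat (RVar x) n))
| Tn_lam A ts : Forall (Tn A) ts -> Tn (BLam A) (RBag (List.map RLam ts))
| Tn_bot : Tn Bot (RBag [])
| Tn_head x B t0 : Tn B t0 -> Tn (BApp (BVar x) B) (RApp (RBag [RVar x]) t0)
| Tn_neu P Q A s t : Tn (BApp P Q) s -> Tn A t -> Tn (BApp (BApp P Q) A) (RApp s t)
| Tn_redex A N s t : Tn A s -> Tn N t -> Tn (BApp (BLam A) N) (RApp (RBag [RLam s]) t).

Definition TnBT (M : lam) : rterm -> Prop :=
  fun t => exists A', inApprox A' M /\ Tn A' t.

Definition rincl (P Q : rterm -> Prop) : Prop :=
  forall t, P t -> exists t', Q t' /\ req t t'.

(* Main.v *)
Require Import Defs.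
From Stdlib Require Import List Permutation Arith Relations Lia.
Import ListNotations.

Inductive le : lamb -> lamb -> Prop :=
| le_botb : le Bot Bot
| le_botv x : le Bot (BVar x)
| le_botl M : le Bot (BLam M)
| le_var x : le (BVar x) (BVar x)
| le_lam a b : le a b -> le (BLam a) (BLam b)
| le_app a b c d : le a b -> le c d -> le (BApp a c) (BApp b d).

Lemma le_refl A : le A A.
Proof. induction A; constructor; auto. Qed.

Lemma le_trans a b c : le a b -> le b c -> le a c.
Proof.
  intros H; revert c; induction H; intros c' H'; inversion H'; subst; try constructor; auto.
Qed.

Lemma approx_le a b : approx a b -> le a b.
Proof.
  induction 1; try constructor; auto using le_refl.
  eapply le_trans; eauto.
Qed.

Lemma le_approx a b : le a b -> approx a b.
Proof.
  induction 1; try constructor; auto; try apply ap_refl.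
  eapply ap_trans. apply ap_appl; eauto. apply ap_appr; eauto.
Qed.

Lemma isNeu_app_inv P Q : isNeu (BApp P Q) ->
  (exists x, P = BVar x /\ isB Q) \/ (isNeu P /\ isA Q).
Proof. intros H; inversion H; subst; eauto. Qed.

Lemma isA_app_inv P Q : isA (BApp P Q) ->
  (exists a, P = BLam a /\ isA a /\ isNeu Q) \/ isNeu (BApp P Q).
Proof.
  intros H; inversion H; subst; eauto.
  inversion H0; subst; auto.
Qed.

Lemma isB_app_inv P Q : isB (BApp P Q) -> isNeu (BApp P Q).
Proof. intros H; inversion H; auto. Qed.

Lemma isNeu_isA n : isNeu n -> isA n.
Proof. intros; apply A_B, B_neu; auto. Qed.

Lemma isNeu_not_app n : isNeu n -> exists P Q, n = BApp P Q.
Proof. intros H; inversion H; eauto. Qed.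

Lemma Tay_lemma M : forall A t, le A (emb M) -> Tn A t -> Tay M t.
Proof.
  induction M; intros A t Hle HT; simpl in Hle.
  - inversion Hle; subst; inversion HT; subst.
    + exact (T_var n 0).
    + constructor.
  - inversion Hle; subst; inversion HT; subst.
    + exact (T_lam M [] (Forall_nil _)).
    + constructor. eapply Forall_impl; [|eassumption]. intros; eauto.
  - inversion Hle; subst; inversion HT; subst.
    + constructor; eauto. eapply IHM1; eauto. exact (Tn_var x 1).
    + constructor; eauto.
    + constructor; eauto. eapply IHM1; eauto. apply (Tn_lam A [s]). constructor; auto.
Qed.

Definition notlamapp (t : rterm) := forall t0 u, t <> RApp (RBag [RLam t0]) u.
Definition notbag (t : rterm) := forall b, t <> RBag b.

Lemma bag_normal b : (forall t, In (RLam t) b -> rnormal t) -> rnormal (RBag b).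
Proof.
  intros H E HS; inversion HS; subst.
  inversion H1; subst.
  apply (H t) with T; auto. apply in_elt.
Qed.

Lemma app_normal s u : rnormal s -> rnormal u ->
  (forall b, s = RBag b -> length b = 1 /\
     (forall v, b = [v] -> notlamapp u /\ forall t0, v = RLam t0 -> notbag u)) ->
  notlamapp s -> rnormal (RApp s u).
Proof.
  intros Hs Hu Hb Hl E HS; inversion HS; subst.
  - destruct (Hb _ eq_refl) as [_ H]. destruct (H _ eq_refl) as [_ H'].
    eapply H'; eauto.
  - destruct (Hb _ eq_refl) as [H _]. auto.
  - eapply Hl; eauto.
  - destruct (Hb _ eq_refl) as [_ H]. destruct (H _ eq_refl) as [H' _].
    eapply H'; eauto.
  - eapply Hs; eauto.
  - eapply Hu; eauto.
Qed.

Lemma norm_lemma A : forall t, Tn A t ->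
  (isA A -> rnormal t) /\ (isB A -> notlamapp t) /\ (isNeu A -> notbag t /\ notlamapp t).
Proof.
  induction A; intros t HT; inversion HT; subst.
  - split; [|split].
    + intros _. apply bag_normal. intros t0 Hin.
      apply repeat_spec in Hin. discriminate.
    + intros _ ? ? ?; discriminate.
    + intros H; inversion H.
  - split; [|split].
    + intros HA. apply bag_normal. intros t0 Hin.
      apply in_map_iff in Hin. destruct Hin as [x [Hx Hin]]. injection Hx; intros; subst.
      eapply Forall_forall in H0; [|eassumption].
      apply (IHA _ H0). inversion HA; subst. inversion H; subst; auto. inversion H1.
    + intros _ ? ? ?; discriminate.
    + intros H; inversion H.
  -
    destruct (IHA2 _ H2) as [IQ1 [IQ2 IQ3]].
    assert (Hn : isB A2 -> rnormal (RApp (RBag [RVar x]) t0)).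
    { intros HB. apply app_normal.
      - apply bag_normal. intros t1 [H|[]]; discriminate.
      - apply IQ1. apply A_B; auto.
      - intros b Hb; injection Hb; intros; subst. split; auto.
        intros v Hv; injection Hv; intros; subst. split; auto. discriminate.
      - intros ? ? ?; discriminate. }
    assert (Hneu : notbag (RApp (RBag [RVar x]) t0) /\ notlamapp (RApp (RBag [RVar x]) t0)).
    { split; intros ? ?; try discriminate. }
    split; [|split].
    + intros HA. apply isA_app_inv in HA.
      destruct HA as [[a [Ha _]]|HN]; [discriminate|].
      apply isNeu_app_inv in HN. destruct HN as [[y [Hy HB]]|[HN _]]; [auto|inversion HN].
    + intros; apply Hneu.
    + intros; apply Hneu.
  -
    destruct (IHA1 _ H1) as [IP1 [IP2 IP3]].
    destruct (IHA2 _ H3) as [IQ1 [IQ2 IQ3]].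
    assert (HN : isNeu (BApp (BApp P Q) A2) -> rnormal (RApp s t0) /\ notbag (RApp s t0) /\ notlamapp (RApp s t0)).
    { intros HN. apply isNeu_app_inv in HN.
      destruct HN as [[y [Hy _]]|[HN HQ]]; [discriminate|].
      destruct (IP3 HN) as [Nb Nl].
      split; [|split].
      - apply app_normal; auto. apply IP1, isNeu_isA; auto.
        intros b Hb; exfalso; eapply Nb; eauto.
      - intros ? ?; discriminate.
      - intros ? ? H; injection H; intros; subst. eapply Nb; eauto. }
    split; [|split].
    + intros HA. apply isA_app_inv in HA.
      destruct HA as [[a [Ha _]]|HN']; [discriminate|]. apply HN; auto.
    + intros HB. apply HN, isB_app_inv; auto.
    + intros H; apply HN in H; tauto.
  -
    destruct (IHA2 _ H3) as [IQ1 [IQ2 IQ3]].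
    split; [|split].
    + intros HA. apply isA_app_inv in HA.
      destruct HA as [[a [Ha [Ha' HNQ]]]|HN].
      * injection Ha; intros; subst.
        destruct (IQ3 HNQ) as [Nb Nl].
        apply app_normal.
        -- apply (IHA1 (RBag (map RLam [s]))). apply Tn_lam. constructor; auto.
           apply A_B, B_lam; auto.
        -- apply IQ1, isNeu_isA; auto.
        -- intros b Hb; injection Hb; intros; subst. split; auto.
        -- intros ? ? ?; discriminate.
      * apply isNeu_app_inv in HN. destruct HN as [[y [Hy _]]|[HN _]]; [discriminate|inversion HN].
    + intros HB. apply isB_app_inv in HB. apply isNeu_app_inv in HB.
      destruct HB as [[y [Hy _]]|[HN _]]; [discriminate|inversion HN].
    + intros HB. apply isNeu_app_inv in HB.
      destruct HB as [[y [Hy _]]|[HN _]]; [discriminate|inversion HN].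
  - split; [|split].
    + intros _. apply bag_normal. intros t0 [].
    + intros _ ? ? ?; discriminate.
    + intros H; inversion H.
Qed.

Inductive sk : Type :=
| SApp (a b : sk) | SNil | SVar1 (n : nat) | SLam1 (a : sk) | SMany.

Fixpoint f (t : rterm) : sk :=
  match t with
  | RApp s u => SApp (f s) (f u)
  | RBag [] => SNil
  | RBag [RVar n] => SVar1 n
  | RBag [RLam t] => SLam1 (f t)
  | RBag _ => SMany
  end.

Lemma f_many b : 2 <= length b -> f (RBag b) = SMany.
Proof.
  destruct b as [|v [|w b]]; simpl; intros; try lia.
  destruct v; reflexivity.
Qed.

Scheme req_ind2 := Induction for req Sort Prop
  with reqv_ind2 := Induction for reqv Sort Prop.

Lemma req_f : forall t u, req t u -> f t = f u.
Proof.
  apply (req_ind2 (fun t u _ => f t = f u) (fun v v' _ => f (RBag [v]) = f (RBag [v'])));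
    intros; try (simpl; congruence).
  - destruct b as [|v [|w b]].
    + apply Permutation_nil in p; subst; auto.
    + apply Permutation_length_1_inv in p; subst; auto.
    + pose proof (Permutation_length p) as L.
      rewrite !f_many; auto; rewrite <- ?L; simpl; lia.
  - destruct b1 as [|x b1]; [destruct b2 as [|y b2]|].
    + simpl; auto.
    + rewrite !f_many; simpl; auto; lia.
    + rewrite !f_many; auto; rewrite length_app; simpl; lia.
Qed.

Fixpoint canon (A : lamb) : rterm :=
  match A with
  | BVar x => RBag [RVar x]
  | BLam a => RBag [RLam (canon a)]
  | Bot => RBag []
  | BApp P Q => RApp (canon P) (canon Q)
  end.

Lemma Tn_lam_inv1 a s : Tn (BLam a) (RBag [RLam s]) -> Tn a s.
Proof.
  intros H; inversion H; subst.
  destruct ts as [|t1 [|]]; simpl in *; try discriminate.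
  injection H1; intros; subst. inversion H2; auto.
Qed.

Lemma canon_Tn A : isA A -> Tn A (canon A).
Proof.
  induction A; intros HA; simpl.
  - exact (Tn_var n 1).
  - apply (Tn_lam A [canon A]). constructor; auto.
    apply IHA. inversion HA; subst. inversion H; subst; auto. inversion H0.
  - apply isA_app_inv in HA. destruct HA as [[a [Ha [Ha' HN]]]|HN].
    + subst. simpl. apply Tn_redex.
      * apply Tn_lam_inv1. apply IHA1. apply A_B, B_lam; auto.
      * apply IHA2, isNeu_isA; auto.
    + apply isNeu_app_inv in HN. destruct HN as [[y [Hy HB]]|[HN HQ]].
      * subst; simpl. apply Tn_head. apply IHA2, A_B; auto.
      * destruct (isNeu_not_app _ HN) as [P [Q E]]. subst.
        apply Tn_neu; auto. apply IHA1, isNeu_isA; auto.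
  - constructor.
Qed.

Lemma f_rep x n : f (RBag (repeat (RVar x) n)) = SNil \/
  (n = 1 /\ f (RBag (repeat (RVar x) n)) = SVar1 x) \/ f (RBag (repeat (RVar x) n)) = SMany.
Proof. destruct n as [|[|n]]; simpl; auto. Qed.

Lemma f_map ts : f (RBag (map RLam ts)) = SNil \/
  (exists s, ts = [s] /\ f (RBag (map RLam ts)) = SLam1 (f s)) \/ f (RBag (map RLam ts)) = SMany.
Proof. destruct ts as [|t1 [|]]; simpl; eauto. Qed.

Ltac fcase :=
  match goal with
  | H : f (RBag (repeat (RVar ?x) ?n)) = _ |- _ =>
      let E := fresh in
      destruct (f_rep x n) as [E|[[? E]|E]]; rewrite E in H; try discriminate; subst
  | H : f (RBag (map RLam ?ts)) = _ |- _ =>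
      let E := fresh in
      destruct (f_map ts) as [E|[[? [? E]]|E]]; rewrite E in H; try discriminate; subst
  end.

Lemma skel_le A : forall A' t', Tn A' t' -> f t' = f (canon A) -> le A A'.
Proof.
  induction A; intros A' t' HT Hf; simpl in Hf;
    inversion HT; subst; try (simpl in Hf; discriminate); try constructor; try fcase.
  - injection Hf; intros; subst; constructor.
  - injection Hf; intros. eapply IHA; eauto.
    match goal with H : Forall _ _ |- _ => inversion H; auto end.
  - injection Hf; intros. apply (IHA1 _ _ (Tn_var x 1)); auto.
  - injection Hf; intros. eapply IHA2; [eassumption|]; auto.
  - injection Hf; intros. eapply IHA1; [eassumption|]; auto.
  - injection Hf; intros. eapply IHA2; [eassumption|]; auto.
  - injection Hf; intros. apply (IHA1 _ (RBag (map RLam [s]))). apply (Tn_lam A [s]). constructor; auto. simpl; auto.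
  - injection Hf; intros. eapply IHA2; [eassumption|]; auto.
Qed.

Theorem lemma4p10 (M : lam) (A : lamb) (HA : isA A) :
  (approx A (emb M) -> rincl (Tn A) (NF (Tay M))) /\
  (rincl (Tn A) (TnBT M) -> inApprox A M).
Proof.
  split.
  - intros Hap t HT. apply approx_le in Hap.
    exists t. split; [|apply req_refl].
    exists t. split.
    + eapply Tay_lemma; eauto.
    + apply nf_refl. destruct (norm_lemma A t HT) as [H _]. auto.
  - intros Hin. destruct (Hin _ (canon_Tn A HA)) as [t' [[A' [[HA' [N [Hred Hap]]] HT']] Hreq]].
    split; auto. exists N. split; auto.
    eapply ap_trans; [|eassumption]. apply le_approx.
    eapply skel_le; eauto. symmetry. apply req_f; auto.
Qed.
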